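(* Let $G$ be a finite group and $p$ a prime such that the Sylow $p$-subgroups of $G$ are cyclic of order $p^r$, and let $\mathbf 1_G$ be the trivial $\mathbb{Z}_p[G]$-lattice. If $r\ge1$, then $$v_p(C_{\theta_G}(\mathbf 1_G))=-r\Big(1-\frac{|Z_G(Q)|}{|N_G(Q)|}\Big)$$ for any non-trivial $p$-subgroup $Q$ of $G$. If $r=0$ (i.e.\ $p\nmid|G|$), then $v_p(C_{\theta_G}(\mathbf 1_G))=0$.
   Context: Artin relation: $\theta_G=[G]-\sum_H\alpha_H[H]$, where $H$ runs over representatives of conjugacy classes of cyclic subgroups, $[H]$ stands for the $G$-set $G/H$, and the $\alpha_H\in\mathbb{Q}$ are uniquely determined by $[\mathbf 1]=\sum_H\alpha_H[\mathbb{Q}[G/H]]$ in $A(\mathbb{Q}[G])$ (Artin induction). For a rational Brauer relation $\theta=\sum_K\beta_K[K]$, one has $v_p(C_\theta(\mathbf 1_G))=-\sum_K\beta_K v_p(|K|)$. This is the regulator constant $\prod_i\det(\tfrac1{|H_i|}\langle\ ,\ \rangle|_{M^{H_i}})/\prod_j\det(\tfrac1{|H'_j|}\langle\ ,\ \rangle|_{M^{H'_j}})$ at $M=\mathbb{Z}_p$ with $\langle x,y\rangle=xy$, extended linearly. $Z_G$ and $N_G$ denote the centraliser and normaliser. *)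

(* Defs.v *)
From HB Require Import structures.
From mathcomp Require Import all_boot all_order all_algebra all_fingroup all_solvable all_field all_character.
Set Implicit Arguments. Unset Strict Implicit. Unset Printing Implicit Defensive.
Import GRing.Theory Num.Theory.
Local Open Scope ring_scope.

(* p-adic valuation of a rational number (v_p(0) = 0 by convention). *)
Definition vp_rat (p : nat) (q : rat) : int :=
  (logn p `|numq q|%N)%:Z - (logn p `|denq q|%N)%:Z.

(* Determinant of the form (1/|H|) <x,y> = xy/|H| on M^H = Z_p for the
   trivial lattice M = 1_G = Z_p (basis {1}): a 1x1 Gram matrix [1/|H|]. *)
Definition reg_det_trivial (gT : finGroupType) (H : {group gT}) : rat :=
  (#|H|%:R)^-1.

(* A rational Brauer relation theta = sum_K beta_K [G/K], encoded as a list
   of pairs (beta_K, K).  The valuation v_p of the regulator constant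
   C_theta(1_G), extended linearly in the coefficients:
     v_p(C_theta(1_G)) = sum_K beta_K v_p(det(1/|K| <,> on M^K)). *)
Definition vp_regconst_trivial (gT : finGroupType) (p : nat)
    (theta : seq (rat * {group gT})) : rat :=
  \sum_(kc <- theta) kc.1 * (vp_rat p (reg_det_trivial kc.2))%:~R.

Definition cyclic_class_reps (gT : finGroupType) (G : {group gT})
    (reps : seq {group gT}) : Prop :=
  (forall K : {group gT}, K \in reps -> (K \subset G) && cyclic K) /\
  (forall H : {group gT}, H \subset G -> cyclic H ->
     count (fun K : {group gT} => (H : {set gT}) \in (K :^: G)%g) reps = 1%N).

(* The Artin coefficients: [1] = sum_H alpha_H [Q[G/H]] in A(Q[G]) (tensor Q),
   expressed via characters (the character map on A(Q[G]) is injective):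
   the permutation character of G/H is 'Ind[G,H] 1. *)
Definition artin_coeffs (gT : finGroupType) (G : {group gT})
    (reps : seq {group gT}) (alpha : {group gT} -> rat) : Prop :=
  (1 : 'CF(G)) = \sum_(H <- reps) (ratr (alpha H) : algC) *: 'Ind[G, H] (1 : 'CF(H)).

Definition artin_relation (gT : finGroupType) (G : {group gT})
    (reps : seq {group gT}) (alpha : {group gT} -> rat)
    : seq (rat * {group gT}) :=
  (1, G) :: [seq (- alpha H, H) | H <- reps].

(* Main.v *)
Require Import Defs.
From HB Require Import structures.
From mathcomp Require Import all_boot all_order all_algebra all_fingroup all_solvable all_field all_character.
Import GRing.Theory Num.Theory.


From mathcomp Require Import zify ring lra.

Set Implicit Arguments. Unset Strict Implicit. Unset Printing Implicit Defensive.


Section Burn.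
Variable gT : finGroupType.
Local Open Scope group_scope.

Lemma conj_comm (x y : gT) : commute x y -> x ^ y = x.
Proof. by move=> cxy; rewrite conjgE cxy mulKg. Qed.

Lemma abel_fusion p (C P : {group gT}) :
  p.-Sylow(C) P -> abelian P -> 'N_C(P) \subset 'C(P) ->
  forall h x, h \in P -> x \in C -> h ^ x \in P -> h ^ x = h.
Proof.
move=> sylP abP nc h x Ph Cx Phx.
have sPC := pHall_sub sylP.
set k := h ^ x.
have cPP : P \subset 'C(P) by rewrite -abelianE.
have sPCk : P \subset 'C_C[k].
  by rewrite subsetI sPC sub_cent1 (subsetP cPP).
have sPxCk : P :^ x \subset 'C_C[k].
  rewrite subsetI -{1}(conjGid Cx) conjSg sPC /k cent1J conjSg.
  by rewrite sub_cent1 (subsetP cPP).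
have sCkC : 'C_C[k] \subset C by apply: subsetIl.
have syl1 : p.-Sylow('C_C[k]) P := pHall_subl sPCk sCkC sylP.
have sylPx : p.-Sylow(C) (P :^ x)%G by rewrite pHallJ.
have syl2 : p.-Sylow('C_C[k]) (P :^ x)%G := pHall_subl sPxCk sCkC sylPx.
have [y Cky defPx] := Sylow_trans syl1 syl2.
have [Cy cky] : y \in C /\ y \in 'C[k] by move/setIP: Cky.
have Nxy : x * y^-1 \in 'N_C(P).
  rewrite inE groupM ?groupV //=; apply/normP.
  by rewrite conjsgM /= defPx conjsgK.
have cxy : x * y^-1 \in 'C(P) := subsetP nc _ Nxy.
have e1 : h ^ (x * y^-1) = h by apply: conj_comm; exact: commute_sym (centP cxy h Ph).
have e2 : h ^ x = h ^ y by rewrite -{1}(mulgKV y x) conjgM e1.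
have ck : k ^ y = k by apply: conj_comm; exact: commute_sym (cent1P cky).
have ck' : k ^ y^-1 = k by rewrite -{1}ck conjgK.
have e3 : h = k ^ y^-1 by rewrite /k e2 conjgK.
by rewrite -/k {1}e3 ck'.
Qed.

Import FiniteModule.

Lemma burnside_count p (C P : {group gT}) :
  p.-Sylow(C) P -> abelian P -> 'N_C(P) \subset 'C(P) ->
  (#|[set s in C | p^'.-elt s]| * #|P|)%N = #|C|.
Proof.
move=> sylP abP nc.
have sPC := pHall_sub sylP.
have eP : idm P @* P = P by rewrite morphim_idm.
have abA : abelian (idm P @* P) by rewrite eP.
have PA : forall y, y \in P -> y \in (idm P @* P)%G by move=> y; rewrite /= eP.
pose T := transfer C abA.
have TM : {in C &, forall x y, T (x * y) = (T x + T y)%R} by move=> x y Cx Cy; apply: transferM.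
have T1 : T 1 = 0%R.
  by apply: (@addrI _ (T 1)); rewrite -TM ?group1 // mulg1 addr0.
have TX : forall s n, s \in C -> T (s ^+ n) = (T s *+ n)%R.
  move=> s n Cs; elim: n => [|n IH]; first by rewrite expg0 T1 mulr0n.
  by rewrite expgS TM ?groupX // IH mulrS.
have TV : forall s, s \in C -> T (s^-1) = (- T s)%R.
  move=> s Cs; apply/eqP; rewrite -subr_eq0 opprK -TM ?groupV // mulVg T1 //.
have TJ : forall s y, s \in C -> y \in C -> T (s ^ y) = T s.
  move=> s y Cs Cy; rewrite conjgE !TM ?groupM ?groupV // TV //.
  idtac.
  by rewrite addrCA addNr addr0.
have cop : coprime #|P| #|C : P| by case/andP: (pHall_Hall sylP).
have TP : forall g, g \in P -> T g = (fmod abA g *+ #|C : P|)%R.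
  move=> g Pg; have Cg := subsetP sPC g Pg.
  have trX := transversalP (rcosets_cycle_partition sPC Cg).
  rewrite /T (transfer_cycle_expansion sPC abA Cg trX).
  rewrite -(sum_index_rcosets_cycle sPC Cg trX) -sumrMnr.
  apply: eq_bigr => x Xx.
  have Cx : x \in C := subsetP (transversal_sub trX) x Xx.
  set n := #|<[g]> : P :* x|.
  have Pgn : g ^+ n \in P by rewrite groupX.
  have Pc : (g ^+ n) ^ x^-1 \in P.
    have := mulg_exp_card_rcosets P g x; rewrite -/n mem_rcoset.
    by rewrite conjgE invgK mulgA.
  have -> : (g ^+ n) ^ x^-1 = g ^+ n by apply: (abel_fusion sylP) => //; rewrite groupV.
  change (fmod abA (g ^+ n) = fmod abA g *+ n)%R.
  by rewrite fmodX // PA.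
have KP : forall g, g \in P -> T g = 0%R -> g = 1.
  move=> g Pg; rewrite TP //.
  have hX : fmod abA (g ^+ #|C : P|) = (fmod abA g *+ #|C : P|)%R by rewrite fmodX // PA.
  rewrite -hX => /(congr1 val).
  rewrite fmodK ?PA ?groupX // fmval0 => /eqP; rewrite -order_dvdn => dv.
  have dv2 : #[g] %| #|P| by apply: order_dvdG.
  have : #[g] %| gcdn #|P| #|C : P| by rewrite dvdn_gcd dv2 dv.
  by rewrite (eqP cop) dvdn1 order_eq1 => /eqP.
have pP : p.-group P := pHall_pgroup sylP.
have Tval : forall s, val (T s) \in P.
  by move=> s; have := fmodP (T s); rewrite /= eP.
have Kpp : forall s, s \in C -> p^'.-elt s -> T s = 0%R.
  move=> s Cs ps; set y := val (T s).
  have y1 : y ^+ #[s] = 1.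
    by rewrite /y -fmvalZ -TX // expg_order T1.
  have dv : #[y] %| #[s] by rewrite order_dvdn y1.
  have py : p.-elt y := mem_p_elt pP (Tval s).
  have p'y : p^'.-nat #[y] := pnat_dvd dv ps.
  have /eqP := pnat_1 py p'y; rewrite order_eq1 => /eqP y1'.
  by apply: val_inj; rewrite fmval0.
have Kq : forall g, g \in C -> T g = 0%R -> p^'.-elt g.
  move=> g Cg Tg; apply/constt1P; set u := g.`_p.
  have [k uk] : exists k, u = g ^+ k by apply/cycleP; apply: cycle_constt.
  have Cu : u \in C by rewrite uk groupX.
  have Tu : T u = 0%R by rewrite uk TX // Tg mul0rn.
  have pu : p.-elt u := p_elt_constt p g.
  have sUC : <[u]> \subset C by rewrite cycle_subG.
  have [y Cy suP] := Sylow_subJ sylP sUC pu.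
  have uP : u ^ y^-1 \in P by rewrite -mem_conjg (subsetP suP) ?cycle_id.
  have := KP _ uP; rewrite TJ ?groupV // => /(_ Tu).
  by move/eqP; rewrite conjg_eq1 => /eqP.
pose Tm := transfer_morphism C abA.
have kerE' : forall x, (x \in 'ker Tm) = (x \in C) && (T x == 0%R).
  move=> x; apply/idP/andP => [kx | [Cx /eqP Tx]].
    by split; [exact: dom_ker kx | apply/eqP; exact: (mker kx)].
  by apply/kerP.
have sKC : 'ker Tm \subset C by apply/subsetP => x; exact: dom_ker.
have eS : [set s in C | p^'.-elt s] = 'ker Tm.
  apply/setP => x; rewrite inE kerE'; apply/andP/andP => [[Cx px] | [Cx /eqP Tx]].
    by split=> //; apply/eqP; exact: Kpp.
  by split=> //; exact: Kq.
rewrite eS -(Lagrange sKC); congr (_ * _)%N.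
have eIm : #|Tm @* C| = #|C : 'ker Tm| by rewrite card_morphim setIid.
rewrite -eIm; apply/eqP; rewrite eqn_leq; apply/andP; split.
  have -> : #|P| = #|Tm @* P|.
    rewrite card_morphim (setIidPr sPC) -indexgI.
    have -> : P :&: 'ker Tm = 1.
      apply/trivgP/subsetP => x /setIP[Px kx]; apply/set1P.
      by apply: KP => //; move: kx; rewrite kerE' => /andP[_ /eqP].
    by rewrite indexg1.
  by apply: subset_leq_card; apply: morphimS.
apply: leq_trans (subset_leq_card (subsetT _)) _.
rewrite cardsT -(card_imset predT val_inj).
by apply: subset_leq_card; apply/subsetP => _ /imsetP[u _ ->]; have := fmodP u; rewrite /= eP.
Qed.
End Burn.


Lemma nt_lemma p a s k m : prime p -> 0 < k -> coprime m p ->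
  p ^ a %| k ^ m - 1 -> p ^ a %| s * (k - 1) -> ~~ (p ^ a %| s) -> p ^ a %| k - 1.
Proof.
move=> pp k0 cmp d1 d2 nd.
case: a d1 d2 nd => [|a] d1 d2 nd; first by rewrite expn0 dvd1n.
have s0 : 0 < s by case: s nd d2 => //; rewrite dvdn0.
have pk : p %| k - 1.
  case: (posnP (k - 1)) => [->|k1]; first by rewrite dvdn0.
  have sk0 : 0 < s * (k - 1) by rewrite muln_gt0 s0.
  rewrite (pfactor_dvdn _ _ sk0) // lognM // in d2.
  rewrite (pfactor_dvdn _ _ s0) // -ltnNge in nd.
  rewrite -(expn1 p) (pfactor_dvdn _ _ k1) //.
  lia.
move: d1; rewrite -{1}(exp1n m) subn_exp Gauss_dvdl //.
rewrite coprime_pexpl // coprime_sym -coprime_modl.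
have kp1 : k %% p = 1 %% p by apply/eqP; rewrite eqn_mod_dvd.
have kj : forall j, k ^ j = 1 %[mod p].
  by move=> j; rewrite -modnXm kp1 modnXm exp1n.
have -> : (\sum_(i < m) k ^ (m.-1 - i) * 1 ^ i) %% p = m %% p.
  rewrite -modn_summ.
  rewrite (eq_bigr (fun _ => 1 %% p)); last by move=> i _; rewrite exp1n muln1 kj.
  by rewrite sum_nat_const card_ord modnMmr muln1.
by rewrite coprime_modl.
Qed.

Section S.
Variable gT : finGroupType.
Local Open Scope group_scope.
Lemma conj_comm2 (x y : gT) : commute x y -> x ^ y = x.
Proof. by move=> cxy; rewrite conjgE cxy mulKg. Qed.

Lemma p'_cent_cyclic p (P : {group gT}) x u : prime p -> p.-group P -> cyclic P ->
  x \in 'N(P) -> p^'.-elt x -> u \in P -> u != 1 -> commute x u -> x \in 'C(P).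
Proof.
move=> pp pP cP nx p'x Pu u1 cxu.
have [g defP] := cyclicP cP.
have Pg : g \in P by rewrite defP cycle_id.
have [k0 gk0] : exists k0, g ^ x = g ^+ k0 by apply/cycleP; rewrite -defP memJ_norm.
set k := (k0 + #[g])%N.
have gk : g ^ x = g ^+ k by rewrite /k expgD expg_order mulg1.
have k0p : (0 < k)%N by rewrite /k addn_gt0 order_gt0 orbT.
have Jn : forall n, g ^ (x ^+ n) = g ^+ (k ^ n).
  elim=> [|n IH]; first by rewrite expg0 conjg1 expn0 expg1.
  by rewrite expgS conjgM gk conjXg IH -expgM expnS mulnC.
have oa : #[g] = (p ^ logn p #[g])%N.
  by rewrite -p_part part_pnat_id // orderE -defP.
set a := logn p #[g] in oa.
have d1 : (p ^ a %| k ^ #[x] - 1)%N.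
  rewrite -oa -eqn_mod_dvd ?expn_gt0 ?k0p //.
  by rewrite -eq_expg_mod_order -Jn expg_order conjg1 expg1.
have [s us] : exists s, u = g ^+ s by apply/cycleP; rewrite -defP.
have ux : u ^ x = u by apply: conj_comm2; apply: commute_sym.
have d2 : (p ^ a %| s * (k - 1))%N.
  rewrite -oa mulnBr muln1 -eqn_mod_dvd ?leq_pmulr //.
  rewrite -eq_expg_mod_order mulnC expgM -gk -conjXg -us ux.
  done.
have nd : ~~ (p ^ a %| s)%N by rewrite -oa order_dvdn -us.
have cop : coprime #[x] p by rewrite coprime_sym prime_coprime // -p'natE.
have d3 := nt_lemma pp k0p cop d1 d2 nd.
have gx : g ^ x = g.
  rewrite gk; apply/eqP; rewrite -(expg1 g) -expgM mul1n eq_expg_mod_order eqn_mod_dvd ?oa //.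
rewrite defP cent_cycle; apply/cent1P.
by rewrite /commute [RHS]conjgC gx.
Qed.
End S.

Section S2.
Variable gT : finGroupType.
Local Open Scope group_scope.

Lemma norm_cent_sylow p (K P : {group gT}) y u : prime p -> p.-Sylow(K) P -> cyclic P ->
  y \in 'N_K(P) -> u \in P -> u != 1 -> commute y u -> y \in 'C(P).
Proof.
move=> pp sylP cP Ny Pu u1 cyu.
have sPK := pHall_sub sylP.
have abP := cyclic_abelian cP.
have sylN : p.-Sylow('N_K(P)) P.
  apply: pHall_subl sylP; last exact: subsetIl.
  by rewrite subsetI sPK normG.
have nPN : P <| 'N_K(P) by apply: normalSG.
rewrite -(consttC p y); apply: groupM.
  have yp : y.`_p \in P.
    rewrite (mem_normal_Hall sylN nPN) ?p_elt_constt //.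
    by have := cycle_constt p y; apply: subsetP; rewrite cycle_subG.
  by apply: (subsetP abP).
have [j ej] : exists j, y.`_p^' = y ^+ j by apply/cycleP; apply: cycle_constt.
have Ny' : y.`_p^' \in 'N(P) by rewrite ej groupX //; case/setIP: Ny.
apply: (@p'_cent_cyclic _ p P _ u) => //.
- exact: pHall_pgroup sylP.
- exact: p_elt_constt.
- rewrite ej; apply: commute_sym; apply: commuteX; exact: commute_sym.
Qed.

Lemma ratio_sub p (K P Q : {group gT}) : prime p -> p.-Sylow(K) P -> cyclic P ->
  Q \subset P -> Q :!=: 1 ->
  (#|'N_K(Q)| * #|'C_K(P)|)%N = (#|'N_K(P)| * #|'C_K(Q)|)%N.
Proof.
move=> pp sylP cP sQP nQ.
have sPK := pHall_sub sylP.
have abP := cyclic_abelian cP.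
have sPCQ : P \subset 'C_K(Q).
  by rewrite subsetI sPK centsC (subset_trans sQP).
have sylC : p.-Sylow('C_K(Q)) P := pHall_subl sPCQ (subsetIl _ _) sylP.
have fr := Frattini_arg (subcent_normal K Q) sylC.
have eN : 'N_('N_K(Q))(P) = 'N_K(P).
  apply/setP => z; rewrite !in_setI; apply/andP/andP => [[/andP[Kz _] Nz]|[Kz Nz]] //.
  split=> //; rewrite Kz /=.
  have ePz : P :^ z = P by apply/normP.
  have sQzP : Q :^ z \subset P by rewrite -{1}ePz conjSg.
  apply/normP; apply/eqP; rewrite (eq_subG_cyclic cP) ?cardJg //.
rewrite eN in fr.
have eI : 'C_K(Q) :&: 'N_K(P) = 'C_K(P).
  apply/setP => z; rewrite !in_setI; apply/idP/idP.
    case/andP=> /andP[Kz cQz] /andP[_ Nz]; rewrite Kz /=.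
    have [u Qu u1] := trivgPn _ nQ.
    apply: (@norm_cent_sylow p K P z u) => //; first by rewrite inE Kz.
      exact: subsetP sQP u Qu.
    exact: (centP cQz u Qu).
  case/andP=> Kz cPz; rewrite Kz (subsetP (centS sQP)) //=.
  by rewrite (subsetP (cent_sub P)).
have := mul_cardG 'C_K(Q) 'N_K(P); rewrite fr eI => e.
by rewrite [RHS]mulnC e.
Qed.
End S2.

Section S3.
Variable gT : finGroupType.
Local Open Scope group_scope.

Lemma ratio p (K P Q : {group gT}) : prime p -> p.-Sylow(K) P -> cyclic P ->
  Q \subset K -> p.-group Q -> Q :!=: 1 ->
  (#|'N_K(Q)| * #|'C_K(P)|)%N = (#|'N_K(P)| * #|'C_K(Q)|)%N.
Proof.
move=> pp sylP cP sQK pQ nQ.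
have [x Kx sQPx] := Sylow_subJ sylP sQK pQ.
have sylPx : p.-Sylow(K) (P :^ x)%G by rewrite pHallJ.
have cPx : cyclic (P :^ x)%G by rewrite /= cyclicJ.
have := ratio_sub pp sylPx cPx sQPx nQ.
have eN : #|'N_K(P :^ x)| = #|'N_K(P)|.
  by rewrite normJ -{1}(conjGid Kx) -conjIg cardJg.
have eC : #|'C_K(P :^ x)| = #|'C_K(P)|.
  by rewrite centJ -{1}(conjGid Kx) -conjIg cardJg.
by rewrite /= eN eC.
Qed.

Lemma cyclic_subgroup_order (P : {group gT}) d : cyclic P -> (d %| #|P|)%N ->
  exists Q : {group gT}, Q \subset P /\ #|Q| = d.
Proof.
case/cyclicP=> g defP dv.
have dv' : (#|P| %/ d %| #[g])%N by rewrite orderE -defP dvdn_div.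
exists <[g ^+ (#|P| %/ d)]>%G; split.
  by rewrite defP cycle_subG /= groupX // cycle_id.
rewrite /= -orderE orderXdiv // orderE -defP divnA // mulnC mulnK //.

Qed.

Lemma count_order p (K P : {group gT}) a j : prime p -> p.-Sylow(K) P -> cyclic P ->
  #|P| = (p ^ a)%N -> (0 < j <= a)%N ->
  ((\sum_(u in K | #[u] == p ^ j) #|'C_K[u]|) * #|'N_K(P)|)%N
    = (#|K| * totient (p ^ j) * #|'C_K(P)|)%N.
Proof.
move=> pp sylP cP oP /andP[j0 ja].
have sPK := pHall_sub sylP.
have pP := pHall_pgroup sylP.
have [Q [sQP oQ]] : exists Q : {group gT}, Q \subset P /\ #|Q| = (p ^ j)%N.
  by apply: cyclic_subgroup_order => //; rewrite oP dvdn_exp2l.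
have sQK := subset_trans sQP sPK.
have pQ : p.-group Q := pgroupS sQP pP.
have nQ : Q :!=: 1.
  rewrite trivg_card1 oQ; apply/eqP => e.
  have := pfactorK j pp; rewrite e logn1; lia.
have pj : p.-nat (p ^ j)%N by rewrite pnatX pnat_id.
set S := Q :^: K.
have memS : forall u, (u \in K) && (#[u] == p ^ j)%N -> <[u]> \in S.
  move=> u /andP[Ku /eqP ou].
  have pu : p.-group <[u]> by rewrite /pgroup -orderE ou.
  have suK : <[u]> \subset K by rewrite cycle_subG.
  have [x Kx suPx] := Sylow_subJ sylP suK pu.
  have sQx : Q :^ x \subset P :^ x by rewrite conjSg.
  have e : <[u]> = Q :^ x.
    apply/eqP; rewrite (eq_subG_cyclic (G := (P :^ x)%G)) ?cyclicJ //=.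
    by rewrite cardJg oQ -orderE ou.
  by rewrite e; apply/imsetP; exists x.
rewrite (partition_big (fun u => <[u]>) [in S] memS) /=.
have inner : forall R, R \in S ->
  (\sum_(u | (u \in K) && (#[u] == p ^ j)%N && (<[u]> == R)) #|'C_K[u]|)%N
    = (totient (p ^ j) * #|'C_K(Q)|)%N.
  move=> R /imsetP[x Kx ->].
  have cQx : cyclic (Q :^ x)%G by rewrite cyclicJ (cyclicS sQP).
  have [g defR] := cyclicP cQx.
  have og : #[g] = (p ^ j)%N by rewrite orderE -defR cardJg oQ.
  have sRK : Q :^ x \subset K by rewrite -(conjGid Kx) conjSg.
  rewrite (eq_bigr (fun _ => #|'C_K(Q)|)); last first.
    move=> u /andP[_ /eqP eu].
    by rewrite -cent_cycle eu centJ -{1}(conjGid Kx) -conjIg cardJg.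
  rewrite sum_nat_const; congr (_ * _)%N.
  rewrite -og totient_gen; apply: eq_card => u; rewrite unfold_in /= !inE /generator defR.
  apply/idP/idP => [/andP[_ /eqP <-] // | /eqP e].
  rewrite -e eqxx andbT !orderE -e eqxx andbT.
  have uR : u \in Q :^ x by rewrite (defR : Q :^ x = <[g]>) e cycle_id.
  exact: (subsetP sRK).
rewrite (eq_bigr _ inner) sum_nat_const card_conjugates.
have e1 := ratio pp sylP cP sQK pQ nQ.
have e2 := Lagrange (subsetIl K 'N(Q)).
rewrite -e2 -!mulnA [RHS]mulnCA; congr (_ * _)%N.
rewrite [RHS]mulnCA; congr (_ * _)%N.
by rewrite e1 mulnC.
Qed.
End S3.

Section S4.
Variable gT : finGroupType.
Local Open Scope group_scope.

Lemma cycle_commute (g x y : gT) : x \in <[g]> -> y \in <[g]> -> commute x y.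
Proof.
by case/cycleP=> i -> /cycleP[j ->]; apply: commuteX2.
Qed.

Lemma decomp_card p (K : {group gT}) u : u \in K -> p.-elt u ->
  #|[set g in K | g.`_p == u]| = #|[set s in 'C_K[u] | p^'.-elt s]|.
Proof.
move=> Ku pu.
rewrite -[RHS](card_imset _ (mulgI u)); apply: eq_card => g.
apply/idP/idP; last first.
  case/imsetP=> s.
  move=> /setIdP[/setIP[Ks /cent1P csu] p's] ->.
  rewrite inE groupM //=.
  rewrite consttM; last exact: commute_sym.
  by rewrite (constt_p_elt pu) (constt1P p's) mulg1 eqxx.
rewrite inE => /andP[Kg /eqP gu]; apply/imsetP.
have sgK : <[g]> \subset K by rewrite cycle_subG.
have Ks : g.`_p^' \in K := subsetP sgK _ (cycle_constt _ g).
exists g.`_p^'; last by rewrite -gu consttC.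
apply/setIdP; split; last exact: p_elt_constt. apply/setIP; split=> //; apply/cent1P.
by rewrite -gu; apply: cycle_commute; apply: cycle_constt.
Qed.
End S4.

Local Open Scope ring_scope.

Local Open Scope ring_scope.

Definition delq (p j : nat) : rat := j%:R + (if (0 < j)%N then (p%:R - 1)^-1 else 0).

Lemma delq0 p : delq p 0 = 0.
Proof. by rewrite /delq addr0. Qed.

Lemma sum_delq p a : prime p ->
  \sum_(j < a.+1) delq p j * (totient (p ^ j))%:R = a%:R * (p ^ a)%:R.
Proof.
move=> pp; have p1 : (1 < p)%N := prime_gt1 pp.
have pq : (p%:R - 1 : rat) != 0.
  rewrite subr_eq0 (eqr_nat rat p 1); apply/eqP; lia.
elim: a => [|a IH]; first by rewrite big_ord1 delq0 !mul0r.
rewrite big_ord_recr /= IH totient_pfactor // /delq /=.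
rewrite expnS !natrM -subn1 natrB; last lia.
rewrite -natr1.
set x := (p%:R : rat) in pq *.
set y := ((p ^ a)%:R : rat).
field.
done.
Qed.

Section S5.
Variable gT : finGroupType.
Local Open Scope group_scope.
Local Open Scope ring_scope.

Lemma sum_delq_group p (K P : {group gT}) a : prime p -> p.-Sylow(K) P -> cyclic P -> #|P| = (p ^ a)%N ->
  (\sum_(g in K) delq p (logn p #[g]%g)) * #|'N_K(P)|%:R
    = #|K|%:R * a%:R * #|'C_K(P)|%:R :> rat.
Proof.
move=> pp sylP cP oP.
have sPK := pHall_sub sylP.
have abP := cyclic_abelian cP.
have la : logn p #|K| = a.
  have := card_Hall sylP; rewrite oP p_part => /eqP.
  by rewrite eqn_exp2l ?prime_gt1 // => /eqP <-.
have vle : forall g, g \in K -> (logn p #[g]%g <= a)%N.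
  by move=> g Kg; rewrite -la dvdn_leq_log ?cardG_gt0 ?order_dvdG.
have e12 : \sum_(g in K) delq p (logn p #[g]%g)
   = \sum_(u in K | p.-elt u) delq p (logn p #[u]%g) * #|[set s in 'C_K[u] | p^'.-elt s]|%:R.
  rewrite (eq_bigr (fun g => delq p (logn p #[g.`_p]%g))); last first.
    by move=> g _; rewrite order_constt logn_part.
  rewrite (partition_big (fun g => g.`_p)%g (fun u => (u \in K) && p.-elt u)) /=; last first.
    move=> g Kg; rewrite p_elt_constt andbT.
    have sgK : (<[g]> \subset K)%g by rewrite cycle_subG.
    by apply: (subsetP sgK); apply: cycle_constt.
  apply: eq_bigr => u /andP[Ku pu].
  rewrite (eq_bigr (fun _ => delq p (logn p #[u]%g))); last by move=> g /andP[_ /eqP ->].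
  rewrite (eq_bigl (fun g => g \in [set g in K | g.`_p == u]%g)); last by move=> g; rewrite inE.
  by rewrite sumr_const -decomp_card // mulr_natr.
have e3 : forall u, u \in K -> p.-elt u ->
    delq p (logn p #[u]%g) * #|[set s in 'C_K[u] | p^'.-elt s]|%:R * (p ^ a)%:R
    = delq p (logn p #[u]%g) * #|'C_K[u]|%:R.
  move=> u Ku pu; case: (eqVneq u 1%g) => [-> | u1].
    by rewrite order1 logn1 delq0 !mul0r.
  rewrite -mulrA -natrM; congr (_ * _%:R).
  have sUK : (<[u]> \subset K)%g by rewrite cycle_subG.
  have [x Kx suPx] := Sylow_subJ sylP sUK pu.
  have sylPx : p.-Sylow(K) (P :^ x)%G by rewrite pHallJ.
  have cPx : cyclic (P :^ x)%G by rewrite /= cyclicJ.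
  have abPx := cyclic_abelian cPx.
  have uPx : u \in (P :^ x)%g by apply: (subsetP suPx); apply: cycle_id.
  have sPC : ((P :^ x)%G \subset 'C_K[u])%g.
    rewrite subsetI (pHall_sub sylPx) sub_cent1.
    exact: (subsetP abPx).
  have sylC : p.-Sylow('C_K[u]) (P :^ x)%G := pHall_subl sPC (subsetIl _ _) sylPx.
  have nc : ('N_('C_K[u])(P :^ x) \subset 'C(P :^ x))%g.
    apply/subsetP => y /setIP[/setIP[Ky /cent1P cyu] Ny].
    apply: (@norm_cent_sylow _ p K (P :^ x)%G y u) => //.
    by rewrite inE Ky.
  by rewrite -(burnside_count sylC abPx nc) /= cardJg oP.
have e5 : \sum_(u in K | p.-elt u) delq p (logn p #[u]%g) * #|'C_K[u]|%:R
   = \sum_(j < a.+1) delq p j * ((\sum_(u in K | #[u]%g == (p ^ j)%N) #|'C_K[u]|)%N)%:R.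
  rewrite (partition_big (fun u => (inord (logn p #[u]%g) : 'I_a.+1)) predT) //=.
  apply: eq_bigr => j _; rewrite natr_sum mulr_sumr.
  apply: eq_big => [u | u].
    case Ku : (u \in K) => //=.
    rewrite -(inj_eq val_inj) /= inordK; last by rewrite ltnS vle.
    apply/andP/eqP => [[pu /eqP <-] | ou].
      by rewrite -p_part part_pnat_id.
    by rewrite /p_elt ou pnatX pnat_id // pfactorK.
  case/andP=> /andP[Ku pu] /eqP ej.
  by rewrite -ej /= inordK // ltnS vle.
have pa0 : ((p ^ a)%:R : rat) != 0 by rewrite pnatr_eq0 -lt0n expn_gt0 prime_gt0.
apply: (mulIf pa0).
rewrite e12 mulrAC mulr_suml.
rewrite (eq_bigr (fun u => delq p (logn p #[u]%g) * #|'C_K[u]|%:R)); last first.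
  by move=> u /andP[Ku pu]; rewrite e3.
rewrite e5 mulr_suml.
rewrite (eq_bigr (fun j : 'I_a.+1 => delq p j * (#|K| * totient (p ^ j) * #|'C_K(P)|)%N%:R)); last first.
  move=> j _; case: (posnP j) => [j0 | j0].
    by rewrite j0 delq0 !mul0r.
  rewrite -mulrA -natrM (count_order pp sylP cP oP) //.
  by rewrite j0 -ltnS ltn_ord.
rewrite (eq_bigr (fun j : 'I_a.+1 => (#|K| * #|'C_K(P)|)%N%:R * (delq p j * (totient (p ^ j))%:R))); last first.
  by move=> j _; rewrite !natrM; ring.
by rewrite -mulr_sumr sum_delq // !natrM; ring.
Qed.
End S5.

Local Open Scope ring_scope.

Lemma vp_inv p n : (0 < n)%N -> vp_rat p ((n%:R : rat)^-1) = - (logn p n)%:Z.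
Proof.
move=> n0.
have e : (n%:R : rat)^-1 = (1%:~R) / ((n%:Z)%:~R) by rewrite pmulrn mul1r.
rewrite /vp_rat e coprimeq_num ?coprimeq_den /=; last 2 first.
- by rewrite /= coprime1n.
- by rewrite /= coprime1n.
have -> : (n%:Z == 0) = false by apply/negbTE; rewrite -lt0n.
rewrite mulr1 gtr0_sg ?ltz_nat //= logn1 sub0r.
done.
Qed.

Lemma ind_sum (gT : finGroupType) (G H : {group gT}) (F : gT -> algC) :
  (H \subset G)%g -> (forall x y, F (x ^ y)%g = F x) ->
  \sum_(x in G) F x * ('Ind[G, H] (1 : 'CF(H))) x
    = #|G|%:R * #|H|%:R^-1 * \sum_(z in H) F z.
Proof.
move=> sHG FJ.
rewrite (eq_bigr (fun x => #|H|%:R^-1 * \sum_(y in G) F (x ^ y)%g * ((x ^ y)%g \in H)%:R)); last first.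
  move=> x _; rewrite cfIndE // mulrCA mulr_sumr; congr (_ * _).
  by apply: eq_bigr => y _; rewrite cfun1E FJ.
rewrite -mulr_sumr exchange_big /=.
rewrite (eq_bigr (fun _ => \sum_(z in G) F z * (z \in H)%:R)); last first.
  move=> y Gy; rewrite (reindex_inj (conjg_inj (y^-1)%g)) /=.
  apply: eq_big => [z | z _]; last by rewrite conjgKV.
  by rewrite groupJr ?groupV.
have eS : \sum_(z in G) F z * (z \in H)%:R = \sum_(z in H) F z.
  rewrite (big_setID H) /= (setIidPr sHG).
  rewrite [X in _ + X]big1 ?addr0; last by move=> z /setDP[_ /negbTE ->]; rewrite mulr0.
  by apply: eq_bigr => z Hz; rewrite Hz mulr1.
rewrite sumr_const -mulr_natr eS.
ring.
Qed.

Lemma sumH (gT : finGroupType) p (H : {group gT}) : prime p -> cyclic H ->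
  \sum_(z in H) delq p (logn p #[z]%g) = #|H|%:R * (logn p #|H|)%:R.
Proof.
move=> pp cH.
have [PH sylPH] := Sylow_exists p H.
have sPH := pHall_sub sylPH.
have cPH : cyclic PH := cyclicS sPH cH.
have oPH : #|PH| = (p ^ logn p #|H|)%N by rewrite (card_Hall sylPH) p_part.
have := sum_delq_group pp sylPH cPH oPH.
have abH := cyclic_abelian cH.
have eN : 'N_H(PH)%g = H.
  apply/setIidPl; apply: subset_trans (cent_sub PH).
  by rewrite centsC (subset_trans sPH).
have eC : 'C_H(PH)%g = H.
  by apply/setIidPl; rewrite centsC (subset_trans sPH).
rewrite eN eC => e.
have H0 : (#|H|%:R : rat) != 0 by rewrite pnatr_eq0 -lt0n cardG_gt0.
by apply: (mulIf H0); rewrite e mulrAC.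
Qed.

Lemma char_step (gT : finGroupType) (G : {group gT}) (reps : seq {group gT})
   (alpha : {group gT} -> rat) (F : gT -> rat) :
  (forall K : {group gT}, K \in reps -> (K \subset G)%g) ->
  artin_coeffs G reps alpha -> (forall x y, F (x ^ y)%g = F x) ->
  \sum_(x in G) F x = #|G|%:R * \sum_(H <- reps) alpha H * (#|H|%:R^-1 * \sum_(z in H) F z).
Proof.
move=> sub hart FJ.
apply: (fmorph_inj (ratr : rat -> algC)).
rewrite rmorph_sum rmorphM rmorph_nat rmorph_sum mulr_sumr.
rewrite (eq_bigr (fun x => \sum_(H <- reps) ratr (F x) * ((ratr (alpha H)) *: 'Ind[G, H] (1 : 'CF(H))) x)); last first.
  move=> x Gx; rewrite -mulr_sumr -sum_cfunE -hart cfun1E Gx mulr1 //.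
rewrite exchange_big /=; apply: eq_big_seq => H rH.
have sHG := sub H rH.
rewrite (eq_bigr (fun x => ratr (alpha H) * (ratr (F x) * 'Ind[G, H] (1 : 'CF(H)) x))); last first.
  by move=> x _; rewrite cfunE mulrCA.
rewrite -mulr_sumr (@ind_sum gT G H (fun x => ratr (F x)) sHG); last by move=> x y; rewrite FJ.
rewrite !rmorphM fmorphV rmorph_nat rmorph_sum.
ring.
Qed.


Unset Implicit Arguments. Set Strict Implicit. Set Printing Implicit Defensive.

Theorem corollary5p11 (gT : finGroupType) (G : {group gT}) (p r : nat)
    (reps : seq {group gT}) (alpha : {group gT} -> rat) :
  prime p ->
  (forall P : {group gT}, (p.-Sylow(G) P)%g -> cyclic P /\ #|P| = (p ^ r)%N) ->
  cyclic_class_reps G reps ->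
  artin_coeffs G reps alpha ->
  ((0 < r)%N ->
     forall Q : {group gT}, Q \subset G -> (p.-group Q)%g -> Q :!=: 1%g ->
       vp_regconst_trivial p (artin_relation G reps alpha)
       = - (r%:R) * (1 - (#|('C_G(Q))%g|%:R / #|('N_G(Q))%g|%:R)))
  /\
  (r = 0%N -> vp_regconst_trivial p (artin_relation G reps alpha) = 0).
Proof.
move=> pp hSyl [hreps _] hart.
have [P sylP] := Sylow_exists p G.
have [cP oP] := hSyl P sylP.
have sub : forall K : {group gT}, K \in reps -> (K \subset G)%g.
  by move=> K /hreps /andP[].
have lG : logn p #|G| = r.
  have := card_Hall sylP; rewrite oP p_part => /eqP.
  by rewrite eqn_exp2l ?prime_gt1 // => /eqP <-.
set S := \sum_(H <- reps) alpha H * (logn p #|H|)%:R.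
have eV : vp_regconst_trivial p (artin_relation G reps alpha) = - r%:R + S.
  rewrite /vp_regconst_trivial /artin_relation big_cons big_map /= /reg_det_trivial.
  rewrite vp_inv ?cardG_gt0 // lG intrN pmulrn mul1r; congr (_ + _).
  apply: eq_big_seq => H rH; rewrite vp_inv ?cardG_gt0 // intrN pmulrn.
  by rewrite mulrNN.
have key := @char_step gT G reps alpha (fun x => delq p (logn p #[x]%g)) sub hart.
rewrite /= in key.
have key2 : \sum_(x in G) delq p (logn p #[x]%g) = #|G|%:R * S.
  rewrite key; last by move=> x y; rewrite orderJ.
  congr (_ * _); apply: eq_big_seq => H rH.
  have /hreps /andP[_ cH] := rH.
  by rewrite sumH // mulKf // pnatr_eq0 -lt0n cardG_gt0.
have LG := sum_delq_group pp sylP cP oP.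
rewrite key2 in LG.
have G0 : (#|G|%:R : rat) != 0 by rewrite pnatr_eq0 -lt0n cardG_gt0.
have nP0 : (#|'N_G(P)%g|%:R : rat) != 0 by rewrite pnatr_eq0 -lt0n cardG_gt0.
have eS : S * #|'N_G(P)%g|%:R = r%:R * #|'C_G(P)%g|%:R.
  apply: (mulfI G0); rewrite mulrA LG; ring.
split.
  move=> r0 Q sQG pQ nQ.
  have e := ratio pp sylP cP sQG pQ nQ.
  have nQ0 : (#|'N_G(Q)%g|%:R : rat) != 0 by rewrite pnatr_eq0 -lt0n cardG_gt0.
  have eq : (#|'N_G(Q)%g|%:R * #|'C_G(P)%g|%:R : rat) = #|'N_G(P)%g|%:R * #|'C_G(Q)%g|%:R.
    by rewrite -!natrM e.
  have eS' : S = r%:R * #|'C_G(P)%g|%:R / #|'N_G(P)%g|%:R by rewrite -eS mulfK.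
  have eq' : (#|'C_G(Q)%g|%:R : rat) = #|'N_G(Q)%g|%:R * #|'C_G(P)%g|%:R / #|'N_G(P)%g|%:R.
    by rewrite eq mulrC mulKf.
  rewrite eV eS' eq'.
  set nP_ := (#|'N_G(P)%g|%:R : rat) in nP0 *.
  set nQ_ := (#|'N_G(Q)%g|%:R : rat) in nQ0 *.
  field.
  by rewrite nP0 nQ0.
move=> r0; rewrite eV.
have : S * #|'N_G(P)%g|%:R = 0 by rewrite eS r0 mul0r.
move/eqP; rewrite mulf_eq0 (negbTE nP0) orbF => /eqP ->.
by rewrite r0 oppr0 addr0.
Qed.
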